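(* Let $X$ be a random variable whose support is contained in the bounded interval $(l,r)$, with $l,r$ finite. Then: (i) for all $\gamma\ge1$ such that $(\gamma,0)\in D_X$ and $(0,\gamma)\in D_X$, $$\left[(r-l)^{1/\gamma}-[H_X(\gamma)]^{1/\gamma}\right]^\gamma\le K_X(\gamma)\le\left[(r-l)^{1/\gamma}+[H_X(\gamma)]^{1/\gamma}\right]^\gamma,$$ $$\left[(r-l)^{1/\gamma}-[K_X(\gamma)]^{1/\gamma}\right]^\gamma\le H_X(\gamma)\le\left[(r-l)^{1/\gamma}+[K_X(\gamma)]^{1/\gamma}\right]^\gamma;$$ (ii) for all $\gamma\ge1$ such that $(0,\gamma)\in D_X$, $$G_X(\gamma,\gamma)\le\left[[K_X(\gamma)]^{1/\gamma}+[K_X(2\gamma)]^{1/\gamma}\right]^\gamma;$$ (iii) for all $\gamma\ge1$ such that $(\gamma,0)\in D_X$, $$G_X(\gamma,\gamma)\le\left[[H_X(\gamma)]^{1/\gamma}+[H_X(2\gamma)]^{1/\gamma}\right]^\gamma.$$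
   Context: For a random variable $X$ with CDF $F$ and survival function $\overline F=1-F$, with $l=\inf\{x:F(x)>0\}$, $r=\sup\{x:\overline F(x)>0\}$, the CIGF is $G_X(\alpha,\beta)=\int_l^r [F(x)]^\alpha[\overline F(x)]^\beta\,dx$ on $D_X=\{(\alpha,\beta)\in\mathbb{R}^2: G_X(\alpha,\beta)<\infty\}$; $H_X(\alpha)=G_X(\alpha,0)=\int_l^r[F(x)]^\alpha dx$ and $K_X(\beta)=G_X(0,\beta)=\int_l^r[\overline F(x)]^\beta dx$. *)

(* Defs.v *)
From HB Require Import structures.
From mathcomp Require Import all_boot all_order all_algebra.
From mathcomp Require Import all_classical all_reals all_analysis.
Set Implicit Arguments. Unset Strict Implicit. Unset Printing Implicit Defensive.
Import Order.TTheory GRing.Theory Num.Theory.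
Local Open Scope classical_set_scope.
Local Open Scope ring_scope.

Section cigf.
Context {d : measure_display} {T : measurableType d} {R : realType}
  {P : probability T R}.

Definition Fr (X : {RV P >-> R}) (x : R) : R := fine (cdf X x).
Definition Fbarr (X : {RV P >-> R}) (x : R) : R := fine (ccdf X x).

Definition lX (X : {RV P >-> R}) : R := inf [set x | 0 < Fr X x].
Definition rX (X : {RV P >-> R}) : R := sup [set x | 0 < Fbarr X x].

Definition CIGF (X : {RV P >-> R}) (a b : R) : \bar R :=
  (\int[lebesgue_measure]_(x in `]lX X, rX X[)
     ((Fr X x `^ a) * (Fbarr X x `^ b))%:E)%E.

Definition inD (X : {RV P >-> R}) (a b : R) : Prop := (CIGF X a b < +oo)%E.

Definition HX (X : {RV P >-> R}) (a : R) : \bar R := CIGF X a 0.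
Definition KX (X : {RV P >-> R}) (b : R) : \bar R := CIGF X 0 b.
End cigf.

(* Main.v *)
Require Import Defs.
From HB Require Import structures.
From mathcomp Require Import all_boot all_order all_algebra.
From mathcomp Require Import all_classical all_reals all_analysis.
From mathcomp Require Import measurable_realfun.
Import Order.TTheory GRing.Theory Num.Theory.
Local Open Scope classical_set_scope.
Local Open Scope ring_scope.

Section helpers.
Context (d : measure_display) (T : measurableType d)
  (R : realType) (P : probability T R) (X : {RV P >-> R}).

Lemma cdf_fin x : cdf X x \is a fin_num.
Proof.
rewrite ge0_fin_numE ?cdf_ge0//.
exact: (le_lt_trans (cdf_le1 X x) (ltry _)).
Qed.

Lemma ccdf_fin x : ccdf X x \is a fin_num.
Proof.
have h := cdf_ccdf_1 X x.
rewrite ge0_fin_numE; last exact: measure_ge0.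
apply: (@le_lt_trans _ _ 1%E); last exact: ltry.
rewrite -h leeDr//; exact: cdf_ge0.
Qed.

Lemma FB1 x : Fr X x + Fbarr X x = 1.
Proof.
by rewrite /Fr /Fbarr -fineD ?cdf_fin ?ccdf_fin// cdf_ccdf_1.
Qed.

Lemma F_ge0 x : 0 <= Fr X x.
Proof. by rewrite /Fr fine_ge0// cdf_ge0. Qed.

Lemma B_ge0 x : 0 <= Fbarr X x.
Proof. by rewrite /Fbarr fine_ge0//; exact: measure_ge0. Qed.

Lemma F_le1 x : Fr X x <= 1.
Proof. by rewrite -(FB1 x) lerDl B_ge0. Qed.

Lemma B_le1 x : Fbarr X x <= 1.
Proof. by rewrite -(FB1 x) lerDr F_ge0. Qed.

Lemma mF : measurable_fun setT (Fr X).
Proof.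
rewrite /Fr.
have h1 := cdf_measurable X.
have h2 : measurable_fun [set: \bar R] (@fine R) := measurable_realfun.fine_measurable measurableT.
exact: (measurableT_comp h2 h1).
Qed.

Lemma mB : measurable_fun setT (Fbarr X).
Proof.
exact: (measurableT_comp (measurable_realfun.fine_measurable measurableT) (ccdf_measurable X)).
Qed.


Local Notation I := ([set` `]lX X, rX X[] : set R).

Lemma mI : measurable I.
Proof. exact: measurable_itv. Qed.

Lemma lr : has_lbound [set x | 0 < Fr X x] ->
  has_ubound [set x | 0 < Fbarr X x] -> lX X <= rX X.
Proof.
move=> hl hu; rewrite leNgt; apply/negP => rl.
set x := (rX X + lX X) / 2.
have xr : rX X < x by rewrite /x ltr_pdivlMr// mulr2n mulrDr mulr1 ltrD2l.
have xl : x < lX X by rewrite /x ltr_pdivrMr// mulr2n mulrDr mulr1 ltrD2r.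
have F0 : Fr X x = 0.
  apply/eqP; rewrite eq_le F_ge0 andbT leNgt; apply/negP => Fx.
  have h : lX X <= x by exact: (ge_inf hl Fx).
  by have := le_lt_trans h xl; rewrite ltxx.
have B1 : 0 < Fbarr X x by have := FB1 x; rewrite F0 add0r => ->; exact: ltr01.
have h : x <= rX X by exact: (ub_le_sup hu B1).
by have := lt_le_trans xr h; rewrite ltxx.
Qed.

Lemma muI : lX X <= rX X -> lebesgue_measure I = (rX X - lX X)%:E.
Proof.
move=> lr; rewrite lebesgue_measure_itv /= lte_fin.
case: ifPn => h; first by rewrite EFinB.
have -> : rX X = lX X by apply/le_anti; rewrite lr andbT leNgt.
by rewrite subrr.
Qed.


Lemma int_bound (f : R -> R) : lX X <= rX X -> measurable_fun setT f ->
  (forall x, 0 <= f x <= 1) ->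
  exists h, (\int[lebesgue_measure]_(x in I) (f x)%:E)%E = h%:E /\ 0 <= h <= rX X - lX X.
Proof.
move=> lr mf f01.
have i0 : (0 <= \int[lebesgue_measure]_(x in I) (f x)%:E)%E.
  by apply: integral_ge0 => x _; rewrite lee_fin; case/andP: (f01 x).
have i1 : (\int[lebesgue_measure]_(x in I) (f x)%:E <= (rX X - lX X)%:E)%E.
  rewrite -muI// -[X in (_ <= X)%E]mul1e -integral_cst; last exact: mI.
  rewrite ge0_le_integral//.
  - by move=> x _; rewrite lee_fin; case/andP: (f01 x).
  - by apply/measurable_EFinP; exact: measurable_funS mf.
  - by move=> x _; rewrite lee_fin; case/andP: (f01 x).
exists (fine (\int[lebesgue_measure]_(x in I) (f x)%:E)%E).
have fin : (\int[lebesgue_measure]_(x in I) (f x)%:E)%E \is a fin_num.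
  by rewrite ge0_fin_numE// (le_lt_trans i1) ?ltry.
rewrite fineK//; split => //.
by rewrite -lee_fin -lee_fin fineK// i0 i1.
Qed.

Lemma normI (g : R) (f : R -> R) : 0 < g -> (forall x, 0 <= f x) ->
  ('N[lebesgue_measure]_g%:E[EFin \o (fun x => \1_I x * f x)%R] =
   (\int[lebesgue_measure]_(x in I) (f x `^ g)%:E) `^ g^-1)%E.
Proof.
move=> g0 f0; rewrite unlock /=; congr (_ `^ _)%E.
rewrite [RHS]integral_mkcond; apply: eq_integral => x _.
rewrite !patchE indicE; case: ifP => _ /=; rewrite ?mul1r ?mul0r; last first.
  by rewrite normr0 powR0 ?gt_eqF.
by rewrite ger0_norm.
Qed.


Lemma mink g : 1 <= g -> lX X <= rX X ->
  ((rX X - lX X)%:E `^ g^-1 <=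
   (\int[lebesgue_measure]_(x in I) (Fr X x `^ g)%:E) `^ g^-1 +
   (\int[lebesgue_measure]_(x in I) (Fbarr X x `^ g)%:E) `^ g^-1)%E.
Proof.
move=> g1 lr.
have g0 : 0 < g by exact: (lt_le_trans ltr01 g1).
have mi : measurable_fun setT (fun x : R => \1_I x : R).
  exact: measurable_indic mI.
have := minkowski_EFin lebesgue_measure
  (measurable_funM mi (mF)) (measurable_funM mi (mB)) g1.
rewrite !normI//; last 2 first.
- by move=> x; exact: B_ge0.
- by move=> x; exact: F_ge0.
move=> h; apply: le_trans h.
have -> : (EFin \o ((\1_I \* Fr X) \+ (\1_I \* Fbarr X)))%R =
          (EFin \o (fun x => \1_I x * (cst 1%R) x)%R).
  by apply/funext => x /=; rewrite -mulrDr FB1.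
rewrite normI//.
under eq_integral => x _ do rewrite /cst powR1.
rewrite integral_cst; last exact: mI.
by rewrite mul1e -(muI lr).
Qed.


Lemma HE g : HX X g = (\int[lebesgue_measure]_(x in I) (Fr X x `^ g)%:E)%E.
Proof. by rewrite /HX /CIGF; apply: eq_integral => x _; rewrite powRr0 mulr1. Qed.

Lemma KE g : KX X g = (\int[lebesgue_measure]_(x in I) (Fbarr X x `^ g)%:E)%E.
Proof. by rewrite /KX /CIGF; apply: eq_integral => x _; rewrite powRr0 mul1r. Qed.

Lemma pow01 (x g : R) : 0 <= g -> 0 <= x <= 1 -> 0 <= x `^ g <= 1.
Proof.
move=> g0 /andP[x0 x1]; rewrite powR_ge0 /=.
have := @ge0_ler_powR R g g0 x 1; rewrite powR1 => h; apply: h; rewrite ?nnegrE//.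
Qed.

Lemma HK_bound g : 0 <= g -> lX X <= rX X ->
  (exists h, HX X g = h%:E /\ 0 <= h <= rX X - lX X) /\
  (exists k, KX X g = k%:E /\ 0 <= k <= rX X - lX X).
Proof.
move=> g0 lr; split.
- rewrite HE; apply: int_bound => //.
    exact: measurableT_comp (measurable_powR g) mF.
  by move=> x; apply: pow01 => //; rewrite F_ge0 F_le1.
- rewrite KE; apply: int_bound => //.
    exact: measurableT_comp (measurable_powR g) mB.
  by move=> x; apply: pow01 => //; rewrite B_ge0 B_le1.
Qed.

Lemma G_le g : 0 <= g ->
  (CIGF X g g <= HX X g /\ CIGF X g g <= KX X g)%E.
Proof.
move=> g0.
have mFg : measurable_fun setT (fun x => Fr X x `^ g).
  exact: measurableT_comp (measurable_powR g) mF.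
have mBg : measurable_fun setT (fun x => Fbarr X x `^ g).
  exact: measurableT_comp (measurable_powR g) mB.
have mG : measurable_fun I (fun x => (Fr X x `^ g * Fbarr X x `^ g)%:E).
  apply/measurable_EFinP; apply: measurable_funS (measurable_funM mFg mBg) => //.
have pF x : 0 <= Fr X x `^ g <= 1 by apply: pow01 => //; rewrite F_ge0 F_le1.
have pB x : 0 <= Fbarr X x `^ g <= 1 by apply: pow01 => //; rewrite B_ge0 B_le1.
rewrite HE KE /CIGF; split; rewrite ge0_le_integral//.
- by move=> x _; rewrite lee_fin mulr_ge0//; [case/andP: (pF x)|case/andP: (pB x)].
- by apply/measurable_EFinP; exact: measurable_funS mFg.
- move=> x _; rewrite lee_fin; case/andP: (pF x) => ? ?; case/andP: (pB x) => ? ?.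
  by rewrite ler_piMr.
- by move=> x _; rewrite lee_fin mulr_ge0//; [case/andP: (pF x)|case/andP: (pB x)].
- by apply/measurable_EFinP; exact: measurable_funS mBg.
- move=> x _; rewrite lee_fin; case/andP: (pF x) => ? ?; case/andP: (pB x) => ? ?.
  by rewrite ler_piMl.
Qed.

End helpers.

Lemma powK (R : realType) (g x : R) : 0 < g -> 0 <= x -> (x `^ g^-1) `^ g = x.
Proof. by move=> g0 x0; rewrite -powRrM mulVf ?gt_eqF// powRr1. Qed.

Lemma powmono (R : realType) (g x y : R) : 0 <= g -> 0 <= x -> x <= y -> x `^ g <= y `^ g.
Proof.
move=> g0 x0 xy; apply: ge0_ler_powR; rewrite ?nnegrE//.
exact: le_trans xy.
Qed.

Lemma real_part (R : realType) (g L h k : R) : 1 <= g -> 0 <= h <= L -> 0 <= k ->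
  L `^ g^-1 <= h `^ g^-1 + k `^ g^-1 ->
  (L `^ g^-1 - h `^ g^-1) `^ g <= k /\ h <= (L `^ g^-1 + k `^ g^-1) `^ g.
Proof.
move=> g1 /andP[h0 hL] k0 mk.
have g0 : 0 < g by exact: (lt_le_trans ltr01 g1).
have gi0 : 0 <= g^-1 by rewrite invr_ge0 ltW.
have L0 : 0 <= L by exact: le_trans hL.
split.
- rewrite -[X in _ <= X](@powK R g k g0 k0); apply: powmono; first exact: ltW.
  + by rewrite subr_ge0; apply: powmono.
  + by rewrite lerBlDl.
- apply: (le_trans hL); rewrite -[X in X <= _](@powK R g L g0 L0); apply: powmono; first exact: ltW.
  + exact: powR_ge0.
  + by rewrite lerDl powR_ge0.
Qed.

Theorem proposition6 (d : measure_display) (T : measurableType d)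
  (R : realType) (P : probability T R) (X : {RV P >-> R}) :
  (* l and r are finite *)
  has_lbound [set x | 0 < Fr X x] ->
  has_ubound [set x | 0 < Fbarr X x] ->
  (* (i) *)
  (forall g : R, 1 <= g -> inD X g 0 -> inD X 0 g ->
     (((rX X - lX X)%:E `^ g^-1 - HX X g `^ g^-1) `^ g <= KX X g
      /\ KX X g <= ((rX X - lX X)%:E `^ g^-1 + HX X g `^ g^-1) `^ g
      /\ ((rX X - lX X)%:E `^ g^-1 - KX X g `^ g^-1) `^ g <= HX X g
      /\ HX X g <= ((rX X - lX X)%:E `^ g^-1 + KX X g `^ g^-1) `^ g)%E) /\
  (* (ii) *)
  (forall g : R, 1 <= g -> inD X 0 g ->
     (CIGF X g g <= (KX X g `^ g^-1 + KX X (2 * g) `^ g^-1) `^ g)%E) /\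
  (* (iii) *)
  (forall g : R, 1 <= g -> inD X g 0 ->
     (CIGF X g g <= (HX X g `^ g^-1 + HX X (2 * g) `^ g^-1) `^ g)%E).
Proof.
move=> hl hu.
have lr := @lr d T R P X hl hu.
have gpos (g : R) : 1 <= g -> 0 < g by move=> g1; exact: (lt_le_trans ltr01 g1).
split; [|split].
- move=> g g1 _ _.
  have g0 := gpos g g1.
  have [[h [Hh hb]] [k [Kk kb]]] := @HK_bound d T R P X g (ltW g0) lr.
  have m := @mink d T R P X g g1 lr.
  rewrite -HE -KE Hh Kk !poweR_EFin -EFinD lee_fin in m.
  rewrite Hh Kk !poweR_EFin !lee_fin.
  have [h0 _] := andP hb; have [k0 _] := andP kb.
  have [a1 a2] := @real_part R _ _ _ _ g1 hb k0 m.
  have m' : (rX X - lX X) `^ g^-1 <= k `^ g^-1 + h `^ g^-1 by move: m; rewrite (addrC (h `^ g^-1)).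
  have [b1 b2] := @real_part R _ _ _ _ g1 kb h0 m'.
  split; first exact: a1. split; first exact: b2. split; first exact: b1. exact: a2.
- move=> g g1 _.
  have g0 := gpos g g1.
  have [_ [k [Kk kb]]] := @HK_bound d T R P X g (ltW g0) lr.
  have [_ [k2 [Kk2 k2b]]] := @HK_bound d T R P X (2 * g) (mulr_ge0 (ler0n _ 2) (ltW g0)) lr.
  apply: (le_trans (@G_le d T R P X g (ltW g0)).2).
  rewrite Kk Kk2 !poweR_EFin lee_fin.
  have [k0 _] := andP kb.
  rewrite -[X in X <= _](@powK R g k g0 k0); apply: powmono; first exact: ltW.
  + exact: powR_ge0.
  + by rewrite lerDl powR_ge0.
- move=> g g1 _.
  have g0 := gpos g g1.
  have [[k [Kk kb]] _] := @HK_bound d T R P X g (ltW g0) lr.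
  have [[k2 [Kk2 k2b]] _] := @HK_bound d T R P X (2 * g) (mulr_ge0 (ler0n _ 2) (ltW g0)) lr.
  apply: (le_trans (@G_le d T R P X g (ltW g0)).1).
  rewrite Kk Kk2 !poweR_EFin lee_fin.
  have [k0 _] := andP kb.
  rewrite -[X in X <= _](@powK R g k g0 k0); apply: powmono; first exact: ltW.
  + exact: powR_ge0.
  + by rewrite lerDl powR_ge0.
Qed.
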